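(* Let $M$ be a binary matroid. Then $P(M)$ has no nontrivial hyperplane split.
   Context: A matroid is binary if it is representable over $\mathbb{F}_2$. For a matroid $N$ on $E=\{1,\dots,n\}$, $P(N)=\mathrm{conv}\{\sum_{i\in B}e_i : B \text{ a base of } N\}\subset\mathbb{R}^n$. A hyperplane split of $P(N)$ is an expression $P(N)=P(N_1)\cup P(N_2)$ with $N_1,N_2$ matroids on $E$ such that $P(N_1)\cap P(N_2)$ is a face of both $P(N_1)$ and $P(N_2)$; it is nontrivial if $P(N_1)\neq P(N)$ and $P(N_2)\neq P(N)$. *)

(* Defs.v *)
From HB Require Import structures.
From mathcomp Require Import all_boot all_order all_algebra.
Unset Printing Implicit Defensive.
Import Order.TTheory GRing.Theory Num.Theory.
Local Open Scope ring_scope.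

(* A matroid on the ground set E = 'I_n, given by its family of bases. *)
Definition is_matroid (n : nat) (Bs : {set {set 'I_n}}) : Prop :=
  Bs != set0 /\
  forall B1 B2, B1 \in Bs -> B2 \in Bs ->
    forall x, x \in B1 :\: B2 ->
      exists2 y, y \in B2 :\: B1 & (y |: (B1 :\ x)) \in Bs.

(* Binary: representable over F_2 — there is a matrix A over F_2 whose
   columns are indexed by E such that the bases are exactly the sets of
   columns forming a basis of the column space of A (i.e. linearly
   independent and of cardinality rank A). *)
Definition binary (n : nat) (Bs : {set {set 'I_n}}) : Prop :=
  exists (r : nat) (A : 'M['F_2]_(r, n)),
    forall B : {set 'I_n},
      B \in Bs <->
      (\rank (colsub (@enum_val _ (pred_of_set B)) A) = #|B|%N /\
       #|B|%N = \rank A).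

Definition indic (R : realFieldType) (n : nat) (B : {set 'I_n}) : 'rV[R]_n :=
  \row_i (if i \in B then 1 else 0).

(* Base polytope P(N) = conv { indic B : B base of N }, as a predicate. *)
Definition base_polytope (R : realFieldType) (n : nat) (Bs : {set {set 'I_n}})
  (x : 'rV[R]_n) : Prop :=
  exists lam : {set 'I_n} -> R,
    (forall B, 0 <= lam B) /\ (forall B, B \notin Bs -> lam B = 0) /\
    \sum_B lam B = 1 /\ x = \sum_B lam B *: indic R n B.

Definition dotv (R : realFieldType) (n : nat) (c x : 'rV[R]_n) : R :=
  \sum_i c 0 i * x 0 i.

(* F is a face of the set P: F = P ∩ {c.x = b} for a valid inequality c.x <= b
   (the empty set and P itself are faces). *)
Definition is_face (R : realFieldType) (n : nat) (F P : 'rV[R]_n -> Prop) : Prop :=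
  exists (c : 'rV[R]_n) (b : R),
    (forall x, P x -> dotv R n c x <= b) /\
    (forall x, F x <-> (P x /\ dotv R n c x = b)).

Definition hyperplane_split (R : realFieldType) (n : nat)
  (N N1 N2 : {set {set 'I_n}}) : Prop :=
  @is_matroid n N1 /\ @is_matroid n N2 /\
  (forall x, base_polytope R n N x <-> base_polytope R n N1 x \/ base_polytope R n N2 x) /\
  is_face R n (fun x => base_polytope R n N1 x /\ base_polytope R n N2 x) (base_polytope R n N1) /\
  is_face R n (fun x => base_polytope R n N1 x /\ base_polytope R n N2 x) (base_polytope R n N2).

Definition same_set (R : realFieldType) (n : nat) (P Q : 'rV[R]_n -> Prop) : Prop :=
  forall x, P x <-> Q x.

Definition nontrivial_split (R : realFieldType) (n : nat)
  (N N1 N2 : {set {set 'I_n}}) : Prop :=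
  hyperplane_split R n N N1 N2 /\
  ~ same_set R n (base_polytope R n N1) (base_polytope R n N) /\
  ~ same_set R n (base_polytope R n N2) (base_polytope R n N).

(* Main.v *)
Require Import Defs.
From HB Require Import structures.
From mathcomp Require Import all_boot all_order all_algebra.
Set Implicit Arguments. Unset Strict Implicit. Unset Printing Implicit Defensive.
Import Order.TTheory GRing.Theory Num.Theory.
Local Open Scope ring_scope.


Definition vv r n (A : 'M['F_2]_(r,n)) (i : 'I_n) : 'rV_r := row i A^T.
Definition sp r n (A : 'M['F_2]_(r,n)) (S : {set 'I_n}) : 'M_r :=
  (\sum_(i in S) <<vv A i>>)%MS.

Lemma rank_colsub r n (A : 'M['F_2]_(r,n)) (B : {set 'I_n}) :
  \rank (colsub (@enum_val _ (pred_of_set B)) A) = \rank (sp A B).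
Proof.
rewrite -mxrank_tr.
have -> : (colsub (@enum_val _ (pred_of_set B)) A)^T = rowsub (@enum_val _ (pred_of_set B)) A^T.
  by apply/matrixP => i j; rewrite !mxE.
apply/eqP; rewrite eqn_leq; apply/andP; split; apply: mxrankS.
  apply/row_subP => j; rewrite row_rowsub.
  apply: (sumsmx_sup (enum_val j)); first exact: enum_valP.
  by rewrite genmxE.
apply/sumsmx_subP => i Hi; rewrite genmxE /vv.
rewrite -(enum_rankK_in Hi Hi) -row_rowsub; exact: row_sub.
Qed.

Lemma rank_sp_le r n (A : 'M['F_2]_(r,n)) S : (\rank (sp A S) <= #|S|)%N.
Proof.
rewrite /sp -sum1_card.
apply: (big_rec2 (fun (y1 : 'M_r) (y2 : nat) => \rank y1 <= y2)%N); first by rewrite mxrank0.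
move=> i y1 y2 _ H.
apply: leq_trans (mxrank_adds_leqif _ _).1 _.
by rewrite mxrank_gen leq_add // rank_leq_row.
Qed.

Lemma F2_cases (a : 'F_2) : a = 0 \/ a = 1.
Proof.
case: a => [[|[|m]] Hm]; [left|right|by []]; exact: val_inj.
Qed.

Lemma sp_U1 r n (A : 'M['F_2]_(r,n)) u (K : {set 'I_n}) : u \notin K ->
  sp A (u |: K) = (<<vv A u>> + sp A K)%MS.
Proof. by move=> H; rewrite /sp big_setU1. Qed.

Lemma notin_sp r n (A : 'M['F_2]_(r,n)) (K : {set 'I_n}) u w :
  u \notin K -> w \notin K -> u != w ->
  \rank (sp A (u |: (w |: K))) = #|u |: (w |: K)| ->
  ~~ (vv A u <= sp A K + <<vv A w>>)%MS.
Proof.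
move=> uK wK uw; rewrite sp_U1; last by rewrite !inE negb_or uw.
rewrite sp_U1 // cardsU1 cardsU1 !inE negb_or uw uK wK /= => Hr.
apply/negP => Hsub.
have Hle : (<<vv A u>> + (<<vv A w>> + sp A K) <= sp A K + <<vv A w>>)%MS.
  rewrite addsmx_sub genmxE Hsub /= addsmxC //.
have := mxrankS Hle; rewrite Hr.
have := (mxrank_adds_leqif (sp A K) <<vv A w>>%MS).1.
rewrite mxrank_gen => H1 H2.
have := leq_trans H2 H1; have := rank_sp_le A K; have := rank_leq_row (vv A w).
move=> a b c; have := leq_trans c (leq_add b a).
by rewrite addnC ltnn.
Qed.

Lemma full_sp r n (A : 'M['F_2]_(r,n)) S : \rank (sp A S) = \rank A ->
  forall i, (vv A i <= sp A S)%MS.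
Proof.
move=> Hr i.
have Hs : (sp A S <= A^T)%MS.
  by apply/sumsmx_subP => j _; rewrite genmxE /vv row_sub.
have H := (mxrank_leqif_sup Hs).2.
have HT : (A^T <= sp A S)%MS by rewrite -H mxrank_tr Hr.
exact: submx_trans (row_sub _ _) HT.
Qed.

Lemma decomp r n (A : 'M['F_2]_(r,n)) (K : {set 'I_n}) p1 p2 q :
  p1 \notin p2 |: K -> p2 \notin K ->
  \rank (sp A (p1 |: (p2 |: K))) = \rank A ->
  ~~ (vv A q <= sp A K + <<vv A p2>>)%MS ->
  ~~ (vv A q <= sp A K + <<vv A p1>>)%MS ->
  exists2 k, (k <= sp A K)%MS & vv A q = vv A p1 + vv A p2 + k.
Proof.
move=> H1 H2 Hr N2 N1.
have := full_sp Hr q; rewrite sp_U1 // sp_U1 //.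
case/sub_addsmxP => u Hq.
have /sub_rVP [al Hal] : (u.1 *m <<vv A p1>> <= vv A p1)%MS.
  by apply: submx_trans (submxMl _ _) _; rewrite genmxE.
have := submxMl u.2 (<<vv A p2>> + sp A K)%MS.
case/sub_addsmxP => u' Hx2.
have /sub_rVP [be Hbe] : (u'.1 *m <<vv A p2>> <= vv A p2)%MS.
  by apply: submx_trans (submxMl _ _) _; rewrite genmxE.
have Hk := submxMl u'.2 (sp A K).
rewrite Hx2 Hal Hbe in Hq.
case: (F2_cases al) => Ha.
  case/negP: N2; rewrite Hq Ha scale0r add0r addsmxC.
  by rewrite addmx_sub_adds // scalemx_sub // genmxE.
case: (F2_cases be) => Hb.
  case/negP: N1; rewrite Hq Hb scale0r add0r addsmxC.
  by rewrite addmx_sub_adds // scalemx_sub // genmxE.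
exists (u'.2 *m sp A K) => //.
by rewrite Hq Ha Hb !scale1r addrA.
Qed.

Definition goodS r n (A : 'M['F_2]_(r,n)) (S : {set 'I_n}) :=
  \rank (sp A S) = #|S| /\ #|S| = \rank A.

Lemma bin4 r n (A : 'M['F_2]_(r,n)) (K : {set 'I_n}) p1 p2 q1 q2 :
  p1 \notin K -> p2 \notin K -> q1 \notin K -> q2 \notin K ->
  p1 != p2 -> q1 != q2 -> q1 != p1 -> q1 != p2 -> q2 != p1 -> q2 != p2 ->
  goodS A (p1 |: (p2 |: K)) -> goodS A (q1 |: (q2 |: K)) ->
  goodS A (q1 |: (p1 |: K)) -> goodS A (q1 |: (p2 |: K)) ->
  goodS A (q2 |: (p1 |: K)) -> goodS A (q2 |: (p2 |: K)) -> False.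
Proof.
move=> p1K p2K q1K q2K p12 q12 q1p1 q1p2 q2p1 q2p2 [Ha1 Ha2] [Hc1 Hc2]
  [H11 _] [H12 _] [H21 _] [H22 _].
have Hn1 : p1 \notin p2 |: K by rewrite !inE negb_or p12.
have Ha : \rank (sp A (p1 |: (p2 |: K))) = \rank A by rewrite Ha1.
have [k1 Hk1 E1] := decomp Hn1 p2K Ha (notin_sp q1K p2K q1p2 H12) (notin_sp q1K p1K q1p1 H11).
have [k2 Hk2 E2] := decomp Hn1 p2K Ha (notin_sp q2K p2K q2p2 H22) (notin_sp q2K p1K q2p1 H21).
have := notin_sp q1K q2K q12 Hc1; apply/negP/negPn.
have -> : vv A q1 = (k1 - k2) + vv A q2.
  by rewrite E1 E2 [RHS]addrCA subrK.
rewrite addmx_sub_adds // ?genmxE //.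
by rewrite addmx_sub // eqmx_opp.
Qed.


Lemma NSC n (N : {set {set 'I_n}}) A1 A2 : is_matroid n N -> A1 \in N -> A2 \in N ->
  A1 \subset A2 -> A1 = A2.
Proof.
move=> [_ Hex] H1 H2 Hsub; apply/eqP; rewrite eqEsubset Hsub /=.
apply/subsetP => x Hx; apply/negPn/negP => Hn.
have Hx' : x \in A2 :\: A1 by rewrite inE Hn Hx.
have [y Hy _] := Hex _ _ H2 H1 x Hx'.
move: Hy; rewrite inE => /andP [Hy1 Hy2]; by rewrite (subsetP Hsub _ Hy2) in Hy1.
Qed.

Section Poly.
Variables (R : realFieldType) (n : nat).
Implicit Types (N : {set {set 'I_n}}) (B D : {set 'I_n}).

Definition bit (i : 'I_n) B : R := if i \in B then 1 else 0.

Lemma coordE (lam : {set 'I_n} -> R) (x : 'rV[R]_n) i :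
  x = \sum_B lam B *: indic R n B -> x 0 i = \sum_B lam B * bit i B.
Proof. by move=> ->; rewrite summxE; apply: eq_bigr => B _; rewrite !mxE. Qed.

Lemma sum_delta (T : finType) (D : T) (c : R) (f : T -> 'rV[R]_n) :
  \sum_(B : T) (if B == D then c else 0) *: f B = c *: f D.
Proof.
rewrite (bigD1 D) //= eqxx big1 ?addr0 // => B /negbTE ->; by rewrite scale0r.
Qed.

Lemma sum_delta1 (T : finType) (D : T) (c : R) :
  \sum_(B : T) (if B == D then c else 0) = c.
Proof. by rewrite (bigD1 D) //= eqxx big1 ?addr0 // => B /negbTE ->. Qed.

Lemma PT N D : D \in N -> base_polytope R n N (indic R n D).
Proof.
move=> HD; exists (fun B => if B == D then 1 else 0); split.
  by move=> B; case: ifP.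
split; first by move=> B HB; case: eqP => // E; rewrite E HD in HB.
by rewrite sum_delta1 sum_delta scale1r.
Qed.

Definition mid D1 D2 : 'rV[R]_n := 2^-1 *: (indic R n D1 + indic R n D2).

Lemma half2 : (2^-1 + 2^-1 : R) = 1.
Proof. by rewrite -mulr2n -[_ *+ 2]mulr_natr mulVf // pnatr_eq0. Qed.

Lemma MP N D1 D2 : D1 \in N -> D2 \in N -> base_polytope R n N (mid D1 D2).
Proof.
move=> H1 H2.
exists (fun B => (if B == D1 then 2^-1 else 0) + (if B == D2 then 2^-1 else 0)).
split.
  by move=> B; apply: addr_ge0; case: ifP => // _; rewrite invr_ge0.
split.
  move=> B HB; case: eqP => [E|_]; first by rewrite E H1 in HB.
  by case: eqP => [E|_]; [rewrite E H2 in HB| rewrite addr0].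
rewrite big_split /= !sum_delta1 half2; split => //.
under eq_bigr do rewrite scalerDl.
by rewrite big_split /= !sum_delta /mid scalerDr.
Qed.

Lemma SUP1 (x : 'rV[R]_n) lam i :
  (forall B, 0 <= lam B) -> \sum_B lam B = 1 -> x = \sum_B lam B *: indic R n B ->
  x 0 i = 1 -> forall B, lam B != 0 -> i \in B.
Proof.
move=> H0 H1 Hx Hi.
have E : \sum_B lam B * (1 - bit i B) = 0.
  under eq_bigr do rewrite mulrBr mulr1.
  by rewrite sumrB H1 -(coordE i Hx) Hi subrr.
have HH : forall B, lam B * (1 - bit i B) = 0.
  move=> B; apply: (psumr_eq0P _ E) => // C _.
  rewrite mulr_ge0 // /bit; case: ifP => _; by rewrite ?subrr ?subr0.
move=> B HB; apply/negPn/negP => Hn.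
have := HH B; rewrite /bit (negbTE Hn) subr0 mulr1 => /eqP; by rewrite (negbTE HB).
Qed.

Lemma SUP0 (x : 'rV[R]_n) lam i :
  (forall B, 0 <= lam B) -> x = \sum_B lam B *: indic R n B ->
  x 0 i = 0 -> forall B, lam B != 0 -> i \notin B.
Proof.
move=> H0 Hx Hi.
have E : \sum_B lam B * bit i B = 0 by rewrite -(coordE i Hx).
have HH : forall B, lam B * bit i B = 0.
  move=> B; apply: (psumr_eq0P _ E) => // C _.
  rewrite mulr_ge0 // /bit; case: ifP => _ //.
move=> B HB; apply/negP => Hn.
have := HH B; rewrite /bit Hn mulr1 => /eqP; by rewrite (negbTE HB).
Qed.

Lemma indicE D i : indic R n D 0 i = bit i D.
Proof. by rewrite mxE. Qed.

Lemma VX N D : base_polytope R n N (indic R n D) -> D \in N.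
Proof.
case=> lam [H0 [Hout [H1 Hx]]].
have [B0 HB0] : exists B, lam B != 0.
  case: (pickP (fun B => lam B != 0)) => [B0 HB0|Hn]; first by exists B0.
  move: H1; rewrite big1 => [/eqP|B _]; first by rewrite eq_sym oner_eq0.
  by have := Hn B => /= /negbFE/eqP.
have E : B0 = D.
  apply/setP => i; case Hi: (i \in D).
    by apply: (SUP1 H0 H1 Hx) HB0; rewrite indicE /bit Hi.
  apply/negbTE; apply: (SUP0 H0 Hx _ HB0); by rewrite indicE /bit Hi.
rewrite -E; apply/negPn/negP => Hn; by rewrite (Hout _ Hn) eqxx in HB0.
Qed.

Lemma midE D1 D2 i : mid D1 D2 0 i = 2^-1 * (bit i D1 + bit i D2).
Proof. by rewrite /mid !mxE. Qed.

Lemma EL N a c x y : is_matroid n N -> a \in N -> c \notin N -> x \in a -> y \notin a ->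
  c = y |: (a :\ x) -> base_polytope R n N (mid a c) -> False.
Proof.
move=> HN Ha Hc Hx Hy Ec [lam [H0 [Hout [H1 Hm]]]].
have Hyc : y \in c by rewrite Ec setU11.
have key : forall B, lam B != 0 -> y \notin B.
  move=> B HB.
  have BN : B \in N by apply/negPn/negP => Hn; rewrite (Hout _ Hn) eqxx in HB.
  have hin : forall i, i \in a -> i \in c -> i \in B.
    move=> i Hia Hic; apply: (SUP1 H0 H1 Hm _ HB).
    by rewrite midE /bit Hia Hic mulrDr mulr1 half2.
  have hout : forall i, i \notin a -> i \notin c -> i \notin B.
    move=> i Hia Hic; apply: (SUP0 H0 Hm _ HB).
    by rewrite midE /bit (negbTE Hia) (negbTE Hic) addr0 mulr0.
  apply/negP => HyB.
  case HxB: (x \in B).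
    have E : a = B.
      apply: NSC HN Ha BN _; apply/subsetP => i Hi.
      case: (eqVneq i x) => [-> //| Hix]; apply: (hin _ Hi).
      by rewrite Ec !inE Hix Hi orbT.
    by rewrite E HyB in Hy.
  have E : c = B.
    apply/eqP; rewrite eqEsubset; apply/andP; split; apply/subsetP => i Hi.
      move: (Hi); rewrite Ec !inE => /orP [/eqP -> //| /andP [Hix Hia]].
      by apply: (hin _ Hia Hi).
    apply/negPn/negP => Hic; case Hia: (i \in a).
      case: (eqVneq i x) => [E|Hix]; first by rewrite -E Hi in HxB.
      by move: Hic; rewrite Ec !inE Hix Hia orbT.
    by move: Hi; apply/negP; apply: hout => //; rewrite Hia.
  by rewrite E BN in Hc.
have : mid a c 0 y = 0.
  rewrite (coordE y Hm) big1 // => B _.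
  case: (eqVneq (lam B) 0) => [->|HB]; first by rewrite mul0r.
  by rewrite /bit (negbTE (key B HB)) mulr0.
rewrite midE /bit (negbTE Hy) Hyc add0r mulr1 => /eqP.
by rewrite invr_eq0 pnatr_eq0.
Qed.
End Poly.


Lemma mem2 (T : finType) (y u w : T) (K L : {set T}) :
  y \in (u |: (w |: K)) :\: L -> K \subset L -> y = u \/ y = w.
Proof.
rewrite !inE => /andP [Hn /orP [/eqP ->|/orP [/eqP ->|Hk]]] HK; [by left|by right|].
by rewrite (subsetP HK _ Hk) in Hn.
Qed.

Lemma d2core n (M N : {set {set 'I_n}}) (K : {set 'I_n}) p1 p2 q1 q2 :
  is_matroid n M -> is_matroid n N -> (forall D, D \in N -> D \in M) ->
  p1 \notin K -> p2 \notin K -> q1 \notin K -> q2 \notin K ->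
  p1 != p2 -> q1 != q2 -> q1 != p1 -> q1 != p2 -> q2 != p1 -> q2 != p2 ->
  p1 |: (p2 |: K) \in N -> q1 |: (q2 |: K) \in M -> q1 |: (q2 |: K) \notin N ->
  q2 |: (p2 |: K) \notin M ->
  (q1 |: (p2 |: K) \in M -> q1 |: (p2 |: K) \in N) ->
  (q2 |: (p1 |: K) \in M -> q2 |: (p1 |: K) \in N) -> False.
Proof.
move=> [_ HexM] [_ HexN] NM p1K p2K q1K q2K p12 q12 q1p1 q1p2 q2p1 q2p2
  Ha Hc HcN HQ HW HZ.
have Ka : K \subset p1 |: (p2 |: K) by apply/subsetP => i Hi; rewrite !inE Hi !orbT.
have Kc : K \subset q1 |: (q2 |: K) by apply/subsetP => i Hi; rewrite !inE Hi !orbT.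
have H1 : p1 \in (p1 |: (p2 |: K)) :\: (q1 |: (q2 |: K)).
  by rewrite !inE eqxx /= !negb_or eq_sym q1p1 eq_sym q2p1 p1K.
have [y Hy HyM] := HexM _ _ (NM _ Ha) Hc p1 H1.
have Ea : (p1 |: (p2 |: K)) :\ p1 = p2 |: K.
  by apply: setU1K; rewrite !inE negb_or p12.
rewrite Ea in HyM.
have HWM : q1 |: (p2 |: K) \in M.
  case: (mem2 Hy Ka) => Ey; rewrite Ey in HyM => //.
  by rewrite HyM in HQ.
have HWN := HW HWM.
have H2 : q1 \in (q1 |: (q2 |: K)) :\: (p1 |: (p2 |: K)).
  by rewrite !inE eqxx /= !negb_or q1p1 q1p2 q1K.
have [x Hx HxM] := HexM _ _ Hc (NM _ Ha) q1 H2.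
have Ec : (q1 |: (q2 |: K)) :\ q1 = q2 |: K.
  by apply: setU1K; rewrite !inE negb_or q12.
rewrite Ec in HxM.
have HZM : p1 |: (q2 |: K) \in M.
  case: (mem2 Hx Kc) => Ex; rewrite Ex in HxM => //.
  by rewrite setUCA HxM in HQ.
have HZN : p1 |: (q2 |: K) \in N by rewrite setUCA HZ // setUCA.
have H3 : p1 \in (p1 |: (q2 |: K)) :\: (q1 |: (p2 |: K)).
  by rewrite !inE eqxx /= !negb_or eq_sym q1p1 p12 p1K.
have [z Hz HzN] := HexN _ _ HZN HWN p1 H3.
have Ez : (p1 |: (q2 |: K)) :\ p1 = q2 |: K.
  by apply: setU1K; rewrite !inE negb_or eq_sym q2p1.
rewrite Ez in HzN.
have Kw : K \subset p1 |: (q2 |: K) by apply/subsetP => i Hi; rewrite !inE Hi !orbT.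
case: (mem2 Hz Kw) => E; rewrite E in HzN.
  by rewrite HzN in HcN.
by rewrite setUCA (NM _ HzN) in HQ.
Qed.


Lemma maxex (R : realFieldType) n (S : {set 'I_n}) (w : 'I_n -> R) i0 : i0 \in S ->
  exists2 y, y \in S & forall z, z \in S -> w z <= w y.
Proof. move=> H; case: (arg_maxP w H) => y Hy Hm; by exists y. Qed.

Definition wt (R : realFieldType) n (w : 'I_n -> R) (D : {set 'I_n}) := \sum_(i in D) w i.

Lemma wt_exch (R : realFieldType) n (w : 'I_n -> R) (m : {set 'I_n}) x y :
  x \in m -> y \notin m -> wt w (y |: (m :\ x)) = wt w m - w x + w y.
Proof.
move=> Hx Hy; rewrite /wt big_setU1 /=; last by rewrite !inE negb_and Hy orbT.
by rewrite (big_setD1 x Hx) /= [w x + _]addrC addrK addrC.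
Qed.

Lemma Gw (R : realFieldType) n (N : {set {set 'I_n}}) (w : 'I_n -> R) (W : R) m :
  is_matroid n N -> (forall D, D \in N -> wt w D <= W) -> m \in N -> wt w m = W ->
  (forall x y, x \in m -> y \notin m -> y |: (m :\ x) \in N -> wt w (y |: (m :\ x)) = W) ->
  forall D, D \in N -> wt w D = W.
Proof.
move=> HN Hle Hm Hwm Hnb.
suff H : forall k D, D \in N -> (#|D :\: m| <= k)%N -> wt w D = W.
  by move=> D HD; apply: (H _ D HD (leqnn _)).
elim=> [|k IH] D HD Hk.
  have E : D = m.
    apply: NSC HN HD Hm _; apply/subsetP => i Hi; apply/negPn/negP => Hn.
    have : i \in D :\: m by rewrite inE Hn Hi.
    have H0 : D :\: m = set0 by apply: cards0_eq; apply/eqP; rewrite -leqn0.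
    by rewrite H0 inE.
  by rewrite E.
case: (eqVneq (wt w D) W) => // Hne.
have [i0 Hi0] : exists i, i \in D :\: m.
  apply/set0Pn/negP => /eqP H0.
  have E : D = m.
    apply: NSC HN HD Hm _; apply/subsetP => i Hi; apply/negPn/negP => Hn.
    have : i \in D :\: m by rewrite inE Hn Hi.
    by rewrite H0 inE.
  by rewrite E Hwm eqxx in Hne.
have [y0 Hy0 Hmax] := maxex w Hi0.
case: HN => HN0 Hex.
have [x0 Hx0 HD'] := Hex _ _ HD Hm y0 Hy0.
move: (Hy0) (Hx0); rewrite !inE => /andP [y0m y0D] /andP [x0D x0m].
have Hk' : (#|(x0 |: (D :\ y0)) :\: m| <= k)%N.
  have Hs : (x0 |: (D :\ y0)) :\: m \subset (D :\: m) :\ y0.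
    apply/subsetP => i; rewrite !inE => /andP [Him /orP [/eqP E|/andP [Hiy HiD]]].
      by rewrite E x0m in Him.
    by rewrite Hiy Him HiD.
  apply: leq_trans (subset_leq_card Hs) _.
  move: Hk; rewrite (cardsD1 y0 (D :\: m)) Hy0 add1n ltnS.
  by [].
have E1 := IH _ HD' Hk'.
rewrite wt_exch // in E1.
have Hlt : wt w D < W by rewrite lt_neqAle Hne Hle.
have Hxy : w y0 < w x0.
  by have := ltrD2l (wt w D - w y0) (w y0) (w x0); rewrite subrK E1 Hlt.
have Hx0' : x0 \in m :\: D by rewrite inE x0D x0m.
have [y' Hy' HS] := Hex _ _ Hm HD x0 Hx0'.
move: (Hy'); rewrite inE => /andP [y'm y'D].
have E2 := Hnb _ _ x0m y'm HS.
rewrite wt_exch // in E2.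
have E3 : w y' = w x0.
  apply: (@addrI _ (wt w m - w x0)); by rewrite E2 subrK Hwm.
have := Hmax _ Hy'; rewrite E3 => Hle'.
by have := lt_le_trans Hxy Hle'; rewrite ltxx.
Qed.


Lemma adj_sym n (a : {set 'I_n}) x y : x \in a -> y \notin a ->
  [/\ y \in y |: (a :\ x), x \notin y |: (a :\ x) & a = x |: ((y |: (a :\ x)) :\ y)].
Proof.
move=> Hx Hy; have xy : x != y by apply/eqP => E; rewrite -E Hx in Hy.
split; first by rewrite setU11.
  by rewrite !inE eqxx (negbTE xy).
by rewrite setU1K ?setD1K // !inE negb_and Hy orbT.
Qed.

Section Split.
Variables (R : realFieldType) (n : nat) (M N1 N2 : {set {set 'I_n}}).
Hypotheses (HM : is_matroid n M) (HN1 : is_matroid n N1) (HN2 : is_matroid n N2)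
  (Hcov : forall x, base_polytope R n M x <-> base_polytope R n N1 x \/ base_polytope R n N2 x).

Lemma in1 D : D \in N1 -> D \in M.
Proof. by move=> H; apply: VX; apply/Hcov; left; apply: PT. Qed.
Lemma in2 D : D \in N2 -> D \in M.
Proof. by move=> H; apply: VX; apply/Hcov; right; apply: PT. Qed.
Lemma inN12 D : D \in M -> D \in N1 \/ D \in N2.
Proof. by move=> H; case: (proj1 (Hcov _) (PT R H)) => /VX; [left|right]. Qed.

Lemma ECL a c x y : a \in N1 -> a \notin N2 -> c \in N2 -> c \notin N1 ->
  x \in a -> y \notin a -> c = y |: (a :\ x) -> False.
Proof.
move=> Ha1 Ha2 Hc2 Hc1 Hx Hy Ec.
case: (proj1 (Hcov _) (MP R (in1 Ha1) (in2 Hc2))) => H.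
  exact: (EL HN1 Ha1 Hc1 Hx Hy Ec H).
have [Hyc Hxc Ea] := adj_sym Hx Hy; rewrite -Ec in Hyc Hxc Ea.
have E : mid R a c = mid R c a by rewrite /mid addrC.
rewrite E in H; exact: (EL HN2 Hc2 Ha2 Hyc Hxc Ea H).
Qed.

Lemma adjN1 a x y : a \in N1 -> a \notin N2 -> x \in a -> y \notin a ->
  y |: (a :\ x) \in M -> y |: (a :\ x) \in N1.
Proof.
move=> Ha1 Ha2 Hx Hy HS; case: (inN12 HS) => // H.
case: (boolP (y |: (a :\ x) \in N1)) => // Hn.
by case: (ECL Ha1 Ha2 H Hn Hx Hy).
Qed.

Lemma d2split (K : {set 'I_n}) p1 p2 q1 q2 :
  p1 \notin K -> p2 \notin K -> q1 \notin K -> q2 \notin K ->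
  p1 != p2 -> q1 != q2 -> q1 != p1 -> q1 != p2 -> q2 != p1 -> q2 != p2 ->
  p1 |: (p2 |: K) \in N1 -> p1 |: (p2 |: K) \notin N2 ->
  q1 |: (q2 |: K) \in N2 -> q1 |: (q2 |: K) \notin N1 ->
  q2 |: (p2 |: K) \notin M -> False.
Proof.
move=> p1K p2K q1K q2K p12 q12 q1p1 q1p2 q2p1 q2p2 Ha1 Ha2 Hc2 Hc1 HQ.
apply: (d2core HM HN1 in1 p1K p2K q1K q2K p12 q12 q1p1 q1p2 q2p1 q2p2 Ha1 (in2 Hc2) Hc1 HQ).
  have E : (p1 |: (p2 |: K)) :\ p1 = p2 |: K by rewrite setU1K // !inE negb_or p12.
  rewrite -{1 2}E => HS; apply: adjN1 => //; first by rewrite setU11.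
  by rewrite !inE !negb_or q1p1 q1p2 q1K.
rewrite setUCA in Ha1 Ha2.
have E : (p2 |: (p1 |: K)) :\ p2 = p1 |: K by rewrite setU1K // !inE negb_or eq_sym p12.
rewrite -{1 2}E => HS; apply: adjN1 => //; first by rewrite setU11.
by rewrite !inE !negb_or q2p1 q2p2 q2K.
Qed.

Lemma mL r (A : 'M['F_2]_(r, n)) (Hbin : forall B, B \in M -> goodS A B)
  (m : {set 'I_n}) x1 y1 x2 y2 :
  x1 \in m -> y1 \notin m -> y1 |: (m :\ x1) \in N1 -> y1 |: (m :\ x1) \notin N2 ->
  x2 \in m -> y2 \notin m -> y2 |: (m :\ x2) \in N2 -> y2 |: (m :\ x2) \notin N1 -> False.
Proof.
move=> x1m y1m Ha1 Ha2 x2m y2m Hc2 Hc1.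
case: (eqVneq x1 x2) => [E|x12].
  rewrite -E in Hc2 Hc1.
  case: (eqVneq y1 y2) => [E'|y12]; first by rewrite E' Hc2 in Ha2.
  apply: (ECL (x := y1) (y := y2) Ha1 Ha2 Hc2 Hc1 (setU11 y1 _)).
    by rewrite !inE negb_or eq_sym y12 negb_and y2m orbT.
  by rewrite setU1K // !inE negb_and y1m orbT.
case: (eqVneq y1 y2) => [E|y12].
  rewrite -E in Hc2 Hc1.
  have x1y : x1 != y1 by apply/eqP => E'; rewrite -E' x1m in y1m.
  have x2y : x2 != y1 by apply/eqP => E'; rewrite -E' x2m in y1m.
  apply: (ECL Ha1 Ha2 Hc2 Hc1 (x := x2) (y := x1)).
  - by rewrite !inE (negbTE x2y) /= x2m andbT eq_sym.
  - by rewrite !inE (negbTE x1y) eqxx.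
  apply/setP => i; rewrite !inE.
  case: (eqVneq i x1) => [->|ix1]; first by rewrite x12 x1m orbT.
  case: (eqVneq i y1) => [->|iy1] //=.
  by rewrite eq_sym x2y.
set K := m :\ x1 :\ x2.
have x2m1 : x2 \in m :\ x1 by rewrite !inE eq_sym x12 x2m.
have x1m2 : x1 \in m :\ x2 by rewrite !inE x12 x1m.
have Ea : y1 |: (m :\ x1) = y1 |: (x2 |: K) by rewrite /K setD1K.
have EK : m :\ x2 :\ x1 = K by apply/setP => i; rewrite /K !inE andbCA.
have Ec : y2 |: (m :\ x2) = y2 |: (x1 |: K) by rewrite -EK setD1K.
have Em : m = x1 |: (x2 |: K) by rewrite /K setD1K // setD1K.
rewrite Ea in Ha1 Ha2; rewrite Ec in Hc1 Hc2.
have y1K : y1 \notin K by rewrite /K !inE (negbTE y1m) !andbF.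
have y2K : y2 \notin K by rewrite /K !inE (negbTE y2m) !andbF.
have x1K : x1 \notin K by rewrite /K !inE eqxx /= andbF.
have x2K : x2 \notin K by rewrite /K !inE eqxx.
have y1x2 : y1 != x2 by apply/eqP => E; rewrite E x2m in y1m.
have y2x1 : y2 != x1 by apply/eqP => E; rewrite E x1m in y2m.
have y1x1 : y1 != x1 by apply/eqP => E; rewrite E x1m in y1m.
have y2x2 : y2 != x2 by apply/eqP => E; rewrite E x2m in y2m.
have y21 : y2 != y1 by rewrite eq_sym.
have x21 : x2 != x1 by rewrite eq_sym.
have x1y2 : x1 != y2 by rewrite eq_sym.
have x2y1 : x2 != y1 by rewrite eq_sym.
have x1y1 : x1 != y1 by rewrite eq_sym.
have x2y2 : x2 != y2 by rewrite eq_sym.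
have Ha1' : x2 |: (y1 |: K) \in N1 by rewrite setUCA.
have Ha2' : x2 |: (y1 |: K) \notin N2 by rewrite setUCA.
have Hc1' : x1 |: (y2 |: K) \notin N1 by rewrite setUCA.
have Hc2' : x1 |: (y2 |: K) \in N2 by rewrite setUCA.
case: (boolP (x1 |: (x2 |: K) \in M)) => H22; last first.
  exact: (d2split y1K x2K y2K x1K y1x2 y2x1 y21 y2x2 x1y1 x12 Ha1 Ha2 Hc2 Hc1 H22).
case: (boolP (x1 |: (y1 |: K) \in M)) => H21; last first.
  exact: (d2split x2K y1K y2K x1K x2y1 y2x1 y2x2 y21 x12 x1y1 Ha1' Ha2' Hc2 Hc1 H21).
case: (boolP (y2 |: (x2 |: K) \in M)) => H12; last first.
  exact: (d2split y1K x2K x1K y2K y1x2 x1y2 x1y1 x12 y21 y2x2 Ha1 Ha2 Hc2' Hc1' H12).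
case: (boolP (y2 |: (y1 |: K) \in M)) => H11; last first.
  exact: (d2split x2K y1K x1K y2K x2y1 x1y2 x12 x1y1 y2x2 y21 Ha1' Ha2' Hc2' Hc1' H11).
apply: (bin4 y1K x2K y2K x1K y1x2 y2x1 y21 y2x2 x1y1 x12).
all: apply: Hbin => //.
- exact: in1.
- exact: in2.
Qed.

Lemma Aedge a0 D0 : a0 \in N1 -> a0 \notin N2 -> D0 \in N2 ->
  exists a x y, [/\ a \in N1, a \notin N2, x \in a, y \notin a & (y |: (a :\ x) \in N1 /\ y |: (a :\ x) \in N2)].
Proof.
move=> Ha01 Ha02 HD0.
have nonempty : forall a, a \in N1 -> a \notin N2 -> exists x, x \in a :\: D0.
  move=> a Ha1 Ha2; apply/set0Pn/negP => /eqP H0.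
  have E : a = D0.
    apply: NSC HM (in1 Ha1) (in2 HD0) _; apply/subsetP => i Hi.
    apply/negPn/negP => Hn; have : i \in a :\: D0 by rewrite inE Hn Hi.
    by rewrite H0 inE.
  by rewrite E HD0 in Ha2.
suff H : forall k a, a \in N1 -> a \notin N2 -> (#|a :\: D0| <= k)%N ->
  exists a x y, [/\ a \in N1, a \notin N2, x \in a, y \notin a & (y |: (a :\ x) \in N1 /\ y |: (a :\ x) \in N2)].
  exact: (H _ a0 Ha01 Ha02 (leqnn _)).
elim=> [|k IH] a Ha1 Ha2 Hk; have [x Hx] := nonempty a Ha1 Ha2.
  by rewrite leqn0 cards_eq0 in Hk; rewrite (eqP Hk) inE in Hx.
case: HM => _ Hex.
have [y Hy HS] := Hex _ _ (in1 Ha1) (in2 HD0) x Hx.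
move: (Hx) (Hy); rewrite !inE => /andP [xD xa] /andP [ya yD].
case: (boolP (y |: (a :\ x) \in N2)) => HS2.
  case: (boolP (y |: (a :\ x) \in N1)) => HS1.
    by exists a, x, y; split => //; split.
  by case: (ECL Ha1 Ha2 HS2 HS1 xa ya).
have HS1 : y |: (a :\ x) \in N1 by case: (inN12 HS) => // H; rewrite H in HS2.
apply: (IH _ HS1 HS2).
have Hs : (y |: (a :\ x)) :\: D0 \subset (a :\: D0) :\ x.
  apply/subsetP => i; rewrite !inE => /andP [HiD /orP [/eqP E|/andP [Hix Hia]]].
    by rewrite E yD in HiD.
  by rewrite Hix HiD Hia.
apply: leq_trans (subset_leq_card Hs) _.
by move: Hk; rewrite (cardsD1 x (a :\: D0)) Hx add1n ltnS.
Qed.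
End Split.


Lemma dotv_indic (R : realFieldType) n (c : 'rV[R]_n) D :
  dotv R n c (indic R n D) = wt (fun i => c 0 i) D.
Proof.
rewrite /dotv /wt [in RHS]big_mkcond; apply: eq_bigr => i _; rewrite mxE.
by case: ifP; rewrite ?mulr1 ?mulr0.
Qed.

Lemma outside (R : realFieldType) n (M N1 N2 : {set {set 'I_n}}) :
  (forall x, base_polytope R n M x <-> base_polytope R n N1 x \/ base_polytope R n N2 x) ->
  ~ same_set R n (base_polytope R n N1) (base_polytope R n M) ->
  exists2 c, c \in M & c \notin N1.
Proof.
move=> Hcov Hn1.
case: (boolP [exists c, (c \in M) && (c \notin N1)]) => [/existsP [c /andP [H1 H2]]| Hn].
  by exists c.
exfalso; apply: Hn1 => x; split; first by move=> H; apply/Hcov; left.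
case=> lam [H0 [Hout [H1 Hx]]]; exists lam; split => //; split => // B HB.
apply: Hout; apply/negP => HBM; move/negP: Hn; apply; apply/existsP; exists B.
by rewrite HBM HB.
Qed.

Theorem theorem3 (R : realFieldType) (n : nat) (M : {set {set 'I_n}}) :
  is_matroid n M -> binary n M ->
  ~ exists N1 N2 : {set {set 'I_n}}, nontrivial_split R n M N1 N2.
Proof.
move=> HM [r [A HA]] [N1 [N2 [[HN1 [HN2 [Hcov [_ Hf2]]]] [Hn1 Hn2]]]].
have Hbin : forall B, B \in M -> goodS A B.
  by move=> B /HA [H1 H2]; split => //; rewrite -rank_colsub.
have [c0 Hc0M Hc01] := outside Hcov Hn1.
have Hc02 : c0 \in N2 by case: (inN12 Hcov Hc0M) => // H; rewrite H in Hc01.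
have Hcov' : forall x, base_polytope R n M x <-> base_polytope R n N2 x \/ base_polytope R n N1 x.
  by move=> x; split => [/Hcov [] H|[] H]; [right|left|apply/Hcov; right|apply/Hcov; left].
have [a0 Ha0M Ha02] := outside Hcov' Hn2.
have Ha01 : a0 \in N1 by case: (inN12 Hcov Ha0M) => // H; rewrite H in Ha02.
have [a [x [y [Ha1 Ha2 Hx Hy [Hm1 Hm2]]]]] := Aedge HM HN1 HN2 Hcov Ha01 Ha02 Hc02.
set m := y |: (a :\ x) in Hm1 Hm2.
have [Hym Hxm Ea] := adj_sym Hx Hy; rewrite -/m in Hym Hxm Ea.
have Hnb : forall x' y', x' \in m -> y' \notin m -> y' |: (m :\ x') \in N2 ->
    y' |: (m :\ x') \in N1.
  move=> x' y' Hx' Hy' HS2; case: (boolP (y' |: (m :\ x') \in N1)) => // HS1.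
  rewrite Ea in Ha1 Ha2.
  by case: (mL HM HN1 HN2 Hcov Hbin Hym Hxm Ha1 Ha2 Hx' Hy' HS2 HS1).
case: Hf2 => c2 [b2 [Hle Hiff]].
have Hint : forall D, D \in N1 -> D \in N2 -> wt (fun i => c2 0 i) D = b2.
  move=> D H1 H2; rewrite -dotv_indic.
  exact: (proj1 (Hiff _) (conj (PT R H1) (PT R H2))).2.
have HG := Gw (w := fun i => c2 0 i) HN2 _ Hm2 (Hint _ Hm1 Hm2) _ Hc02.
have E : wt (fun i => c2 0 i) c0 = b2.
  apply: HG.
    by move=> D HD; rewrite -dotv_indic; apply: Hle; apply: PT.
  move=> x' y' Hx' Hy' HS; apply: Hint => //; exact: Hnb.
rewrite -dotv_indic in E.
have := (proj2 (Hiff _) (conj (PT R Hc02) E)).1 => /VX H.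
by rewrite H in Hc01.
Qed.
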